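(* Let $m\ge1$, $r_1,r_2>0$ with $r_1^2+r_2^2=1$, and let $\varphi_1:\mathbb{S}^m\to\mathbb{S}^{n_1}(r_1)$ and $\varphi_2:\mathbb{S}^m\to\mathbb{S}^{n_2}(r_2)$ be harmonic maps with constant energy densities. Then the map $\varphi=\iota\circ(\varphi_1,\varphi_2):\mathbb{S}^m\to\mathbb{S}^{n_1+n_2+1}$, where $\iota$ is the canonical inclusion of $\mathbb{S}^{n_1}(r_1)\times\mathbb{S}^{n_2}(r_2)$ into $\mathbb{S}^{n_1+n_2+1}$, is proper biharmonic if and only if $r_1=r_2=1/\sqrt2$ and $e(\varphi_1)\neq e(\varphi_2)$.
   Context: $\mathbb{S}^n(r)$ is the round sphere of radius $r$ centred at $0$, $\mathbb{S}^m$ the unit sphere. Energy density $e(\varphi)=\frac12|d\varphi|^2$. Proper biharmonic means vanishing bitension field $\tau_2(\varphi)=-\Delta\tau(\varphi)-\operatorname{trace}R^N(d\varphi\cdot,\tau(\varphi))d\varphi\cdot$ (with $\Delta=-\operatorname{trace}\nabla^2$) but nonvanishing tension field $\tau(\varphi)=\operatorname{trace}\nabla d\varphi$. *)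

(* Defs.v *)
(* Maps between spheres are represented
   extrinsically: points of S^m are unit vectors of R^(m+1) = 'rV[R]_(m.+1)
   (Euclidean norm, written with an explicit dot product), a map
   phi : S^m -> S^n(r) is a function 'rV_(m.+1) -> 'rV_(n.+1) whose values
   off S^m are irrelevant (everything is computed through the
   0-homogeneous extension). *)
From HB Require Import structures.
From mathcomp Require Import all_boot all_order all_algebra.
From mathcomp Require Import all_classical all_reals all_analysis.
Set Implicit Arguments. Unset Strict Implicit. Unset Printing Implicit Defensive.
Import Order.TTheory GRing.Theory Num.Theory.
Import numFieldNormedType.Exports.
Local Open Scope classical_set_scope.
Local Open Scope ring_scope.

Section SphereMaps.
Variable R : realType.

Definition dot (k : nat) (u v : 'rV[R]_k) : R := \sum_(i < k) u 0 i * v 0 i.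

Definition sphere {k : nat} (r : R) : set 'rV[R]_k := [set x | dot x x = r ^+ 2].

Definition ebase (k : nat) (j : 'I_k) : 'rV[R]_k := delta_mx 0 j.

Variables (k N : nat).  (* domain R^k (k = m+1), target R^N *)

Definition hext (f : 'rV[R]_k -> 'rV[R]_N) : 'rV[R]_k -> 'rV[R]_N :=
  fun x => f ((Num.sqrt (dot x x))^-1 *: x).

Fixpoint iterD (s : seq 'rV[R]_k) (g : 'rV[R]_k -> 'rV[R]_N) : 'rV[R]_k -> 'rV[R]_N :=
  match s with
  | [::] => g
  | v :: s' => fun x => 'D_v (iterD s' g) x
  end.

Definition smooth_on_sphere (f : 'rV[R]_k -> 'rV[R]_N) : Prop :=
  forall (s : seq 'rV[R]_k) (x : 'rV[R]_k), x != 0 -> differentiable (iterD s (hext f)) x.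

(* differential of f on the sphere applied to the ambient basis vector e_j
   (equals df(tangential part of e_j)) *)
Definition dS (f : 'rV[R]_k -> 'rV[R]_N) (j : 'I_k) (x : 'rV[R]_k) : 'rV[R]_N :=
  'D_(ebase j) (hext f) x.

(* Laplace-Beltrami operator (trace of the Hessian) of S^(k-1), componentwise *)
Definition lapS (f : 'rV[R]_k -> 'rV[R]_N) (x : 'rV[R]_k) : 'rV[R]_N :=
  \sum_(j < k) 'D_(ebase j) ('D_(ebase j) (hext f)) x.

Definition dnorm2 (f : 'rV[R]_k -> 'rV[R]_N) (x : 'rV[R]_k) : R :=
  \sum_(j < k) dot (dS f j x) (dS f j x).
Definition energy_density (f : 'rV[R]_k -> 'rV[R]_N) (x : 'rV[R]_k) : R :=
  dnorm2 f x / 2.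

Definition tproj (r : R) (y w : 'rV[R]_N) : 'rV[R]_N := w - (dot w y / r ^+ 2) *: y.

(* tension field tau(phi) = trace nabla d phi of phi : S^(k-1) -> S^(N-1)(r) *)
Definition tension (r : R) (f : 'rV[R]_k -> 'rV[R]_N) (x : 'rV[R]_k) : 'rV[R]_N :=
  tproj r (f x) (lapS f x).

Definition harmonic_into (r : R) (f : 'rV[R]_k -> 'rV[R]_N) : Prop :=
  forall x : 'rV[R]_k, sphere 1 x -> tension r f x = 0.

(* For a map phi into the unit sphere S^(N-1) and a section V of phi^{-1} T S^(N-1):
   rough Laplacian  trace nabla^2 V = -Delta V  computed with the pull-back
   connection nabla^phi_X V = tproj (dV(X)) *)
Definition roughLap (f V : 'rV[R]_k -> 'rV[R]_N) (x : 'rV[R]_k) : 'rV[R]_N :=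
  tproj 1 (f x) (lapS V x) + \sum_(j < k) dot (V x) (dS f j x) *: dS f j x.

(* trace R^N(d phi . , V) d phi .   for the unit sphere,
   R^N(X,Y)Z = <Y,Z> X - <X,Z> Y *)
Definition curvTrace (f V : 'rV[R]_k -> 'rV[R]_N) (x : 'rV[R]_k) : 'rV[R]_N :=
  \sum_(j < k) (dot (V x) (dS f j x) *: dS f j x - dot (dS f j x) (dS f j x) *: V x).

(* bitension field tau_2(phi) = -Delta tau(phi) - trace R^N(d phi, tau(phi)) d phi *)
Definition bitension (f : 'rV[R]_k -> 'rV[R]_N) (x : 'rV[R]_k) : 'rV[R]_N :=
  roughLap f (tension 1 f) x - curvTrace f (tension 1 f) x.

Definition proper_biharmonic (f : 'rV[R]_k -> 'rV[R]_N) : Prop :=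
  (forall x : 'rV[R]_k, sphere 1 x -> bitension f x = 0) /\
  ~ (forall x : 'rV[R]_k, sphere 1 x -> tension 1 f x = 0).

End SphereMaps.

(* iota o (phi1, phi2) : S^m -> S^(n1+n2+1) subset R^(n1+1) x R^(n2+1) *)
Definition sphere_pair_map (R : realType) (k N1 N2 : nat)
  (f1 : 'rV[R]_k -> 'rV[R]_N1) (f2 : 'rV[R]_k -> 'rV[R]_N2) :
  'rV[R]_k -> 'rV[R]_(N1 + N2) := fun x => row_mx (f1 x) (f2 x).

(* Main.v *)
Require Import Defs.
From HB Require Import structures.
From mathcomp Require Import all_boot all_order all_algebra.
From mathcomp Require Import all_classical all_reals all_analysis.
From mathcomp Require Import ring lra.
Import Order.TTheory GRing.Theory Num.Theory.
Local Open Scope classical_set_scope.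
Local Open Scope ring_scope.

Import numFieldNormedType.Exports.
Set Implicit Arguments. Unset Strict Implicit. Unset Printing Implicit Defensive.

Lemma alg1 (F : fieldType) (p q c1 c2 : F) : p != 0 -> q != 0 -> q = 1 - p ->
  let al1 := - (2 * c1) / p in let al2 := - (2 * c2) / q in
  let E := 2 * c1 + 2 * c2 in
  let a := al1 + E in let b := al2 + E in
  let M := a * al1 * p + b * al2 * q in
  let D := 2 * c2 * p - 2 * c1 * q in
  [/\ a = D / p, b = - D / q, a * al1 - M + E * a = D ^+ 2 * (q - p) / (p ^+ 2 * q)
   & b * al2 - M + E * b = D ^+ 2 * (p - q) / (p * q ^+ 2)].
Proof.
move=> p0 q0 hq /=; subst q.
by split; field; rewrite ?p0 ?q0.
Qed.


Lemma alg (R : rcfType) (r1 r2 c1 c2 : R) :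
  0 < r1 -> 0 < r2 -> r1 ^+ 2 + r2 ^+ 2 = 1 ->
  let p := r1 ^+ 2 in let q := r2 ^+ 2 in
  let al1 := - (2 * c1) / p in let al2 := - (2 * c2) / q in
  let E := 2 * c1 + 2 * c2 in
  let a := al1 + E in let b := al2 + E in
  let M := a * al1 * p + b * al2 * q in
  ((a * al1 - M + E * a = 0 /\ b * al2 - M + E * b = 0) /\ ~ (a = 0 /\ b = 0)) <->
  [/\ r1 = 1 / Num.sqrt 2, r2 = 1 / Num.sqrt 2 & c1 != c2].
Proof.
move=> r1p r2p hs p q.
have p0 : p != 0 by rewrite /p expf_eq0 gt_eqF.
have q0 : q != 0 by rewrite /q expf_eq0 gt_eqF.
have hq : q = 1 - p by rewrite /q /p -hs; ring.
have [ha hb h1 h2] := @alg1 R p q c1 c2 p0 q0 hq.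
move: ha hb h1 h2 => /=.
set D := 2 * c2 * p - 2 * c1 * q.
move=> ha hb h1 h2 /=.
rewrite h1 h2 ha hb.
have hab : (D / p = 0 /\ - D / q = 0) <-> D = 0.
  split; first by case=> /eqP; rewrite mulf_eq0 invr_eq0 (negbTE p0) orbF => /eqP.
  by move=> ->; rewrite !mul0r oppr0 mul0r.
rewrite hab.
have s2 : Num.sqrt 2 ^+ 2 = 2 :> R by rewrite sqr_sqrtr.
have s2p : 0 < Num.sqrt 2 :> R by rewrite sqrtr_gt0.
have hr : forall r : R, 0 < r -> (r = 1 / Num.sqrt 2) <-> (r ^+ 2 = 1 / 2).
  move=> r rp; split => [->|h]; first by rewrite expr_div_n s2 expr1n.
  have : (r * Num.sqrt 2) ^+ 2 = 1 by rewrite exprMn h s2 div1r mulVf // pnatr_eq0.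
  move/eqP; rewrite sqrf_eq1 => /orP[/eqP h'|/eqP h'].
    have -> : 1 / Num.sqrt 2 = (r * Num.sqrt 2) / Num.sqrt 2 by rewrite h'.
    by rewrite mulrK // unitfE gt_eqF.
  have : 0 < r * Num.sqrt 2 by rewrite mulr_gt0.
  by rewrite h' ltr0N1.
have hD : D = (c2 - c1) * 2 * p - 2 * c1 * (q - p) by rewrite /D; ring.
split.
- case=> [[e1 e2] nD].
  have D2 : D ^+ 2 != 0 by rewrite expf_eq0; apply/eqP.
  have den : p ^+ 2 * q != 0 by apply: mulf_neq0 => //; apply: expf_neq0.
  have e1' : D ^+ 2 * (q - p) = 0 by rewrite -(divfK den (D ^+ 2 * (q - p))) e1 mul0r.
  move/eqP: e1'; rewrite mulf_eq0 (negbTE D2) /= subr_eq0 => /eqP pq.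
  have hp : p = 1 / 2 by rewrite pq in hq; lra.
  split; [exact/(hr _ r1p) | apply/(hr _ r2p); by rewrite -/q pq |].
  apply/negP => /eqP c12; apply: nD; rewrite hD c12 pq; ring.
- case=> /(hr _ r1p) hp /(hr _ r2p) hqq c12; rewrite -/p in hp; rewrite -/q in hqq; split.
    have -> : q - p = 0 by rewrite hp hqq subrr.
    have -> : p - q = 0 by rewrite hp hqq subrr.
    by rewrite !mulr0 !mul0r.
  move=> D0; move: hD; rewrite D0 hp hqq subrr mulr0 subr0 => /eqP.
  move=> h; move/eqP: c12; apply; lra.
Qed.


Section S.
Variable R : realType.
Variable k : nat.
Local Notation V := 'rV[R]_k.

Lemma near_neq0 (x : V) : x != 0 -> \forall y \near x, y != 0.
Proof.
move=> x0.
have : closed [set (0 : V)].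
  apply: accessible_closed_set1; apply: hausdorff_accessible.
  exact: norm_hausdorff.
move/closed_openC => o.
have : open_nbhs x (~` [set 0]) by split => //= /eqP; rewrite (negbTE x0).
move/open_nbhs_nbhs; apply: filterS => y /= /eqP //.
Qed.

Lemma dotC n (u v : 'rV[R]_n) : dot u v = dot v u.
Proof. by apply: eq_bigr => i _; rewrite mulrC. Qed.

Lemma dotZl n a (u v : 'rV[R]_n) : dot (a *: u) v = a * dot u v.
Proof. by rewrite /dot mulr_sumr; apply: eq_bigr => i _; rewrite mxE mulrA. Qed.

Lemma dotZr n a (u v : 'rV[R]_n) : dot u (a *: v) = a * dot u v.
Proof. by rewrite dotC dotZl dotC. Qed.

Lemma dotDl n (u w v : 'rV[R]_n) : dot (u + w) v = dot u v + dot w v.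
Proof. by rewrite /dot -big_split; apply: eq_bigr => i _; rewrite mxE mulrDl. Qed.

Lemma dotNl n (u v : 'rV[R]_n) : dot (- u) v = - dot u v.
Proof. by rewrite -scaleN1r dotZl mulN1r. Qed.

Lemma dotBl n (u w v : 'rV[R]_n) : dot (u - w) v = dot u v - dot w v.
Proof. by rewrite dotDl dotNl. Qed.

Lemma dot_suml n I (r : seq I) (P : pred I) (F : I -> 'rV[R]_n) v :
  dot (\sum_(i <- r | P i) F i) v = \sum_(i <- r | P i) dot (F i) v.
Proof.
elim/big_rec2: _ => [|i a b _ <-]; last by rewrite dotDl.
by rewrite /dot big1 // => i _; rewrite mxE mul0r.
Qed.

Lemma dot_row n1 n2 (a c : 'rV[R]_n1) (b d : 'rV[R]_n2) :
  dot (row_mx a b) (row_mx c d) = dot a c + dot b d.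
Proof. by rewrite /dot big_split_ord /=; congr (_ + _); apply: eq_bigr => i _; rewrite ?row_mxEl ?row_mxEr. Qed.

Lemma dot_ge0 n (u : 'rV[R]_n) : 0 <= dot u u.
Proof. by apply: sumr_ge0 => i _; rewrite -expr2 sqr_ge0. Qed.

Lemma dot_eq0 n (u : 'rV[R]_n) : dot u u = 0 -> u = 0.
Proof.
move=> /eqP; rewrite psumr_eq0 => [/allP h|i _]; last by rewrite -expr2 sqr_ge0.
apply/rowP => i; rewrite mxE; have := h i (mem_index_enum _).
by rewrite /= -expr2 sqrf_eq0 => /eqP.
Qed.

Lemma sum_row n1 n2 I (r : seq I) (P : pred I) (A : I -> 'rV[R]_n1) (B : I -> 'rV[R]_n2) :
  \sum_(i <- r | P i) row_mx (A i) (B i) = row_mx (\sum_(i <- r | P i) A i) (\sum_(i <- r | P i) B i).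
Proof.
elim/big_rec3: _ => [|i a b c _ ->]; first by rewrite row_mx0.
by rewrite add_row_mx.
Qed.

Lemma derivable_coord N (F : V -> 'rV[R]_N) x v i :
  derivable F x v -> derivable (fun y => F y 0 i) x v.
Proof. by move/derivable_mxP. Qed.

Lemma derive_coord N (F : V -> 'rV[R]_N) x v i :
  derivable F x v -> 'D_v F x 0 i = 'D_v (fun y => F y 0 i) x.
Proof. by move=> d; rewrite derive_mx // mxE. Qed.

Lemma dot_fun N (F G : V -> 'rV[R]_N) :
  (fun y => dot (F y) (G y)) = \sum_(i < N) ((fun y => F y 0 i) * (fun y => G y 0 i)).
Proof. by rewrite fct_sumE; apply/funext => y. Qed.

Lemma derivable_dot N (F G : V -> 'rV[R]_N) x v : derivable F x v -> derivable G x v ->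
  derivable (fun y => dot (F y) (G y)) x v.
Proof.
move=> dF dG; rewrite dot_fun; apply: derivable_sum => i.
by apply: derivableM; apply: derivable_coord.
Qed.

Lemma derive_dot N (F G : V -> 'rV[R]_N) x v : derivable F x v -> derivable G x v ->
  'D_v (fun y => dot (F y) (G y)) x = dot ('D_v F x) (G x) + dot (F x) ('D_v G x).
Proof.
move=> dF dG; rewrite dot_fun.
rewrite derive_sum => [|i]; last by apply: derivableM; apply: derivable_coord.
rewrite /dot -big_split; apply: eq_bigr => i _ /=.
rewrite deriveM; try exact: derivable_coord.
rewrite -!derive_coord // addrC; congr (_ + _); exact: mulrC.
Qed.

Lemma sph_d1 N (F : V -> 'rV[R]_N) x v c : x != 0 ->
  (forall y, y != 0 -> dot (F y) (F y) = c) -> derivable F x v ->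
  dot (F x) ('D_v F x) = 0.
Proof.
move=> x0 hF dF.
have h0 : 'D_v (fun y => dot (F y) (F y)) x = 0.
  rewrite (near_eq_derive (g := cst c)) ?derive_cst //.
  near=> y; rewrite /= hF //; near: y; exact: near_neq0.
move: h0; rewrite derive_dot // dotC => /eqP; rewrite -mulr2n mulrn_eq0 /= => /eqP.
by [].
Unshelve. all: by end_near. Qed.

Lemma sph_d2 N (F : V -> 'rV[R]_N) x v c : x != 0 ->
  (forall y, y != 0 -> dot (F y) (F y) = c) -> (forall y, y != 0 -> derivable F y v) ->
  derivable ('D_v F) x v ->
  dot (F x) ('D_v ('D_v F) x) = - dot ('D_v F x) ('D_v F x).
Proof.
move=> x0 hF dF ddF.
have h0 : 'D_v (fun y => dot (F y) ('D_v F y)) x = 0.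
  rewrite (near_eq_derive (g := cst 0)) ?derive_cst //.
  near=> y; rewrite /= (sph_d1 _ hF (dF y _)) //; near: y; exact: near_neq0.
move: h0; rewrite derive_dot //; last exact: dF.
by move/eqP; rewrite addrC addr_eq0 => /eqP.
Unshelve. all: by end_near. Qed.

Lemma hext_on N (f : V -> 'rV[R]_N) x : sphere 1 x -> hext f x = f x.
Proof. by rewrite /sphere /= /hext => ->; rewrite expr1n sqrtr1 invr1 scale1r. Qed.

Lemma dot_neq0 n (y : 'rV[R]_n) : y != 0 -> dot y y != 0.
Proof. by move=> y0; apply/eqP => /dot_eq0 /eqP; rewrite (negbTE y0). Qed.

Lemma nrm_sphere (y : V) : y != 0 -> sphere 1 ((Num.sqrt (dot y y))^-1 *: y).
Proof.
move=> y0; rewrite /sphere /= dotZl dotZr mulrA -expr2 exprVn sqr_sqrtr ?dot_ge0 //.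
by rewrite mulVf ?expr1n // dot_neq0.
Qed.

Lemma hext_sph N (f : V -> 'rV[R]_N) r : (forall x, sphere 1 x -> sphere r (f x)) ->
  forall y, y != 0 -> dot (hext f y) (hext f y) = r ^+ 2.
Proof. by move=> h y y0; exact: (h _ (nrm_sphere y0)). Qed.

Lemma smooth_d1 N (f : V -> 'rV[R]_N) : smooth_on_sphere f ->
  forall v y, y != 0 -> derivable (hext f) y v.
Proof. by move=> s v y y0; apply: diff_derivable; exact: (s [::] y y0). Qed.

Lemma smooth_d2 N (f : V -> 'rV[R]_N) : smooth_on_sphere f ->
  forall v w y, y != 0 -> derivable ('D_v (hext f)) y w.
Proof. by move=> s v w y y0; apply: diff_derivable; exact: (s [:: v] y y0). Qed.

Lemma derive_row N1 N2 (A : V -> 'rV[R]_N1) (B : V -> 'rV[R]_N2) x v :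
  derivable A x v -> derivable B x v ->
  derivable (fun y => row_mx (A y) (B y)) x v /\
  'D_v (fun y => row_mx (A y) (B y)) x = row_mx ('D_v A x) ('D_v B x).
Proof.
move=> dA dB.
have d : derivable (fun y => row_mx (A y) (B y)) x v.
  apply/derivable_mxP => i j; rewrite -(splitK j); case: (fintype.split j) => j' /=.
  - have -> : (fun y => row_mx (A y) (B y) i (lshift N2 j')) = fun y => A y i j'.
      by apply/funext => y; rewrite row_mxEl.
    by move/derivable_mxP: dA.
  - have -> : (fun y => row_mx (A y) (B y) i (rshift N1 j')) = fun y => B y i j'.
      by apply/funext => y; rewrite row_mxEr.
    by move/derivable_mxP: dB.
split => //; rewrite derive_mx //; apply/matrixP => i j; rewrite mxE -(splitK j).
case: (fintype.split j) => j' /=.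
- rewrite row_mxEl; have -> : (fun y => row_mx (A y) (B y) i (lshift N2 j')) = fun y => A y i j'.
    by apply/funext => y; rewrite row_mxEl.
  by rewrite derive_mx // mxE.
- rewrite row_mxEr; have -> : (fun y => row_mx (A y) (B y) i (rshift N1 j')) = fun y => B y i j'.
    by apply/funext => y; rewrite row_mxEr.
  by rewrite derive_mx // mxE.
Qed.

Lemma derive_scale N a (A : V -> 'rV[R]_N) x v : derivable A x v ->
  derivable (fun y => a *: A y) x v /\ 'D_v (fun y => a *: A y) x = a *: 'D_v A x.
Proof. by move=> d; split; [exact: derivableZ | exact: deriveZ]. Qed.

Lemma pair_D N1 N2 (A1 : V -> 'rV[R]_N1) (A2 : V -> 'rV[R]_N2) (T : V -> 'rV[R]_(N1 + N2))
    a b v x :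
  (forall y, y != 0 -> derivable A1 y v) -> (forall y, y != 0 -> derivable A2 y v) ->
  (forall y, y != 0 -> T y = row_mx (a *: A1 y) (b *: A2 y)) -> x != 0 ->
  'D_v T x = row_mx (a *: 'D_v A1 x) (b *: 'D_v A2 x).
Proof.
move=> d1 d2 hT x0.
rewrite (near_eq_derive (g := fun y => row_mx (a *: A1 y) (b *: A2 y))); last first.
  near=> y; rewrite /= hT //; near: y; exact: near_neq0.
have [dz1 ez1] := derive_scale a (d1 x x0).
have [dz2 ez2] := derive_scale b (d2 x x0).
by have [_ ->] := derive_row dz1 dz2; rewrite ez1 ez2.
Unshelve. all: by end_near. Qed.

Lemma pair_DD N1 N2 (A1 : V -> 'rV[R]_N1) (A2 : V -> 'rV[R]_N2) (T : V -> 'rV[R]_(N1 + N2))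
    a b v x :
  (forall y, y != 0 -> derivable A1 y v) -> (forall y, y != 0 -> derivable A2 y v) ->
  (forall y, y != 0 -> derivable ('D_v A1) y v) -> (forall y, y != 0 -> derivable ('D_v A2) y v) ->
  (forall y, y != 0 -> T y = row_mx (a *: A1 y) (b *: A2 y)) -> x != 0 ->
  'D_v ('D_v T) x = row_mx (a *: 'D_v ('D_v A1) x) (b *: 'D_v ('D_v A2) x).
Proof.
move=> d1 d2 dd1 dd2 hT x0.
apply: (pair_D (A1 := 'D_v A1) (A2 := 'D_v A2)) => // y y0.
exact: pair_D.
Qed.

Lemma sphere_neq0 (z : V) : sphere 1 z -> z != 0.
Proof.
rewrite /sphere /= => h; apply/eqP => z0; move: h; rewrite z0 /dot big1 => [|i _]; last by rewrite mxE mul0r.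
by move/eqP; rewrite expr1n eq_sym oner_eq0.
Qed.

Lemma map_facts N (f : V -> 'rV[R]_N) r c : 0 < r ->
  smooth_on_sphere f -> (forall x, sphere 1 x -> sphere r (f x)) ->
  harmonic_into r f -> (forall x, sphere 1 x -> energy_density f x = c) ->
  forall z, sphere 1 z ->
  [/\ forall j, dot (f z) (dS f j z) = 0,
      dnorm2 f z = 2 * c,
      lapS f z = (- (2 * c) / r ^+ 2) *: f z
    & dot (f z) (f z) = r ^+ 2].
Proof.
move=> r0 sm sph harm en z zs.
have z0 := sphere_neq0 zs.
have hF := hext_sph sph.
have e1 : forall j, dot (f z) (dS f j z) = 0.
  by move=> j; rewrite /dS -(hext_on f zs); apply: (sph_d1 z0 hF); apply: smooth_d1.
have e2 : dnorm2 f z = 2 * c.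
  by have := en z zs; rewrite /energy_density => <-; rewrite mulrC divfK // pnatr_eq0.
have e4 : dot (f z) (f z) = r ^+ 2 by exact: sph.
have e3 : dot (lapS f z) (f z) = - (2 * c).
  rewrite /lapS dot_suml -e2 /dnorm2 -sumrN; apply: eq_bigr => j _.
  rewrite dotC -(hext_on f zs) (sph_d2 z0 hF) //; last by apply: smooth_d2.
  by move=> y y0; apply: smooth_d1.
split => //.
have := harm z zs; rewrite /tension /tproj => /eqP; rewrite subr_eq0 => /eqP ->.
by rewrite e3.
Qed.

End S.


Lemma rowZ_eq0 (R : realType) n1 n2 (u : 'rV[R]_n1) (w : 'rV[R]_n2) s t :
  u != 0 -> w != 0 -> (row_mx (s *: u) (t *: w) = 0 <-> s = 0 /\ t = 0).
Proof.
move=> u0 w0; split.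
  by move/eqP; rewrite row_mx_eq0 !scaler_eq0 (negbTE u0) (negbTE w0) !orbF => /andP[/eqP -> /eqP ->].
by case=> -> ->; rewrite !scale0r row_mx0.
Qed.

Unset Implicit Arguments. Set Strict Implicit.

Theorem mainTheorem10 (R : realType) (m n1 n2 : nat) (r1 r2 : R)
  (phi1 : 'rV[R]_(m.+1) -> 'rV[R]_(n1.+1)) (phi2 : 'rV[R]_(m.+1) -> 'rV[R]_(n2.+1))
  (c1 c2 : R) :
  (1 <= m)%N -> 0 < r1 -> 0 < r2 -> r1 ^+ 2 + r2 ^+ 2 = 1 ->
  smooth_on_sphere phi1 -> smooth_on_sphere phi2 ->
  (forall x, sphere 1 (x : 'rV[R]_(m.+1)) -> sphere r1 (phi1 x)) ->
  (forall x, sphere 1 (x : 'rV[R]_(m.+1)) -> sphere r2 (phi2 x)) ->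
  harmonic_into r1 phi1 -> harmonic_into r2 phi2 ->
  (forall x, sphere 1 (x : 'rV[R]_(m.+1)) -> energy_density phi1 x = c1) ->
  (forall x, sphere 1 (x : 'rV[R]_(m.+1)) -> energy_density phi2 x = c2) ->
  (proper_biharmonic (sphere_pair_map phi1 phi2) <->
   [/\ r1 = 1 / Num.sqrt 2, r2 = 1 / Num.sqrt 2 & c1 != c2]).
Proof.
move=> m1 r1p r2p hs sm1 sm2 sp1 sp2 h1 h2 en1 en2.
set Phi := sphere_pair_map phi1 phi2.
have F1 := map_facts r1p sm1 sp1 h1 en1.
have F2 := map_facts r2p sm2 sp2 h2 en2.
pose al1 := - (2 * c1) / r1 ^+ 2. pose al2 := - (2 * c2) / r2 ^+ 2.
pose E := 2 * c1 + 2 * c2. pose a := al1 + E. pose b := al2 + E.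
pose M := a * al1 * r1 ^+ 2 + b * al2 * r2 ^+ 2.
have hPhi : forall y, y != 0 -> hext Phi y = row_mx (1 *: hext phi1 y) (1 *: hext phi2 y).
  by move=> y _; rewrite !scale1r.
have r10 : r1 != 0 by rewrite gt_eqF.
have r20 : r2 != 0 by rewrite gt_eqF.
have dS_Phi : forall z, sphere 1 z -> forall j, dS Phi j z = row_mx (dS phi1 j z) (dS phi2 j z).
  move=> z zs j.
  by rewrite /dS (pair_D (fun y y0 => smooth_d1 sm1 y0) (fun y y0 => smooth_d1 sm2 y0) hPhi (sphere_neq0 zs)) !scale1r.
have lap_Phi : forall z, sphere 1 z -> lapS Phi z = row_mx (lapS phi1 z) (lapS phi2 z).
  move=> z zs; rewrite /lapS -sum_row; apply: eq_bigr => j _.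
  by rewrite (pair_DD (fun y y0 => smooth_d1 sm1 y0) (fun y y0 => smooth_d1 sm2 y0) (fun y y0 => smooth_d2 sm1 y0) (fun y y0 => smooth_d2 sm2 y0) hPhi (sphere_neq0 zs)) !scale1r.
have dn_Phi : forall z, sphere 1 z -> dnorm2 Phi z = E.
  move=> z zs; have [_ e1 _ _] := F1 z zs; have [_ e2 _ _] := F2 z zs.
  rewrite /dnorm2; under eq_bigr do rewrite dS_Phi // dot_row.
  by rewrite big_split /=; move: e1 e2; rewrite /dnorm2 => -> ->.
have tau_z : forall z, sphere 1 z -> tension 1 Phi z = row_mx (a *: phi1 z) (b *: phi2 z).
  move=> z zs; have [_ _ l1 d1] := F1 z zs; have [_ _ l2 d2] := F2 z zs.
  rewrite /tension /tproj lap_Phi // l1 l2.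
  have -> : Phi z = row_mx (phi1 z) (phi2 z) by [].
  rewrite dot_row !dotZl d1 d2 expr1n divr1.
  rewrite scale_row_mx opp_row_mx add_row_mx -!scalerBl.
  by congr row_mx; congr (_ *: _); rewrite /a /b /al1 /al2 /E; field; rewrite ?r10 ?r20.
have htau : forall y, y != 0 -> hext (tension 1 Phi) y = row_mx (a *: hext phi1 y) (b *: hext phi2 y).
  by move=> y y0; rewrite /hext tau_z //; exact: nrm_sphere.
have laptau : forall z, sphere 1 z ->
    lapS (tension 1 Phi) z = row_mx ((a * al1) *: phi1 z) ((b * al2) *: phi2 z).
  move=> z zs; have [_ _ l1 _] := F1 z zs; have [_ _ l2 _] := F2 z zs.
  rewrite /lapS (eq_bigr (fun j => row_mx (a *: 'D_(@ebase R _ j) ('D_(@ebase R _ j) (hext phi1)) z)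
      (b *: 'D_(@ebase R _ j) ('D_(@ebase R _ j) (hext phi2)) z))); last first.
    move=> j _.
    exact: (pair_DD (fun y y0 => smooth_d1 sm1 y0) (fun y y0 => smooth_d1 sm2 y0) (fun y y0 => smooth_d2 sm1 y0) (fun y y0 => smooth_d2 sm2 y0) htau (sphere_neq0 zs)).
  rewrite sum_row -!scaler_sumr.
  move: l1 l2; rewrite /lapS => -> ->.
  by rewrite !scalerA.
have bit : forall z, sphere 1 z ->
    bitension Phi z = row_mx ((a * al1 - M + E * a) *: phi1 z) ((b * al2 - M + E * b) *: phi2 z).
  move=> z zs; have [ort1 _ _ d1] := F1 z zs; have [ort2 _ _ d2] := F2 z zs.
  rewrite /bitension /roughLap /curvTrace laptau //.
  have hdz : forall j, dot (tension 1 Phi z) (dS Phi j z) = 0.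
    by move=> j; rewrite tau_z // dS_Phi // dot_row !dotZl ort1 ort2 !mulr0 addr0.
  rewrite big1 => [|j _]; last by rewrite hdz scale0r.
  under eq_bigr do rewrite hdz scale0r sub0r.
  rewrite sumrN -scaler_suml.
  move: (dn_Phi z zs); rewrite /dnorm2 => ->.
  rewrite /tproj tau_z // expr1n divr1.
  have -> : Phi z = row_mx (phi1 z) (phi2 z) by [].
  rewrite dot_row !dotZl d1 d2 addr0.
  by rewrite opprK !scale_row_mx !scalerA opp_row_mx !add_row_mx -!scalerBl -!scalerDl.
have z0s : sphere 1 (@ebase R _ (ord0 : 'I_(m.+1))).
  rewrite /sphere /= /dot (bigD1 ord0) //= big1 => [|i ni]; last by rewrite /ebase !mxE (negbTE ni) andbF mul0r.
  by rewrite /ebase !mxE eqxx expr1n mulr1 addr0.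
have nz1 : forall z, sphere 1 z -> phi1 z != 0.
  move=> z zs; have [_ _ _ d] := F1 z zs; apply/eqP => e; move: d; rewrite e /dot big1 => [|i _]; last by rewrite mxE mul0r.
  by move/eqP; rewrite eq_sym expf_eq0 (negbTE r10) andbF.
have nz2 : forall z, sphere 1 z -> phi2 z != 0.
  move=> z zs; have [_ _ _ d] := F2 z zs; apply/eqP => e; move: d; rewrite e /dot big1 => [|i _]; last by rewrite mxE mul0r.
  by move/eqP; rewrite eq_sym expf_eq0 (negbTE r20) andbF.
have hB : (forall z, sphere 1 z -> bitension Phi z = 0) <-> (a * al1 - M + E * a = 0 /\ b * al2 - M + E * b = 0).
  split.
    by move=> h; have := h _ z0s; rewrite bit // rowZ_eq0 //; [apply: nz1 | apply: nz2].
  by move=> hh z zs; rewrite bit //; apply/rowZ_eq0 => //; [apply: nz1 | apply: nz2].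
have hT : (forall z, sphere 1 z -> tension 1 Phi z = 0) <-> (a = 0 /\ b = 0).
  split.
    by move=> h; have := h _ z0s; rewrite tau_z // rowZ_eq0 //; [apply: nz1 | apply: nz2].
  by move=> hh z zs; rewrite tau_z //; apply/rowZ_eq0 => //; [apply: nz1 | apply: nz2].
have H := @alg R r1 r2 c1 c2 r1p r2p hs.
cbv zeta in H.
rewrite /proper_biharmonic hB hT.
exact: H.
Qed.
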